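(* Let $\hat V=[n]\cup\{s,t\}$, and let $\hat f$ map an edge-weight vector $w\in\mathbb{R}^{\binom{\hat V}{2}}$ (for which the maximizer is unique) to $$\hat f(w)=\arg\max_{y\in\{-1,1\}^{\hat V},\ y_s=1,\ y_t=-1}\ \sum_{\{i,j\}}w_{\{i,j\}}(1-y_iy_j),$$ the unique maximum $s$-$t$ cut. Let $S=\{\{u,v\}:u\in\{s,t\},v\in[n]\}$. Then $S$ is a dominating set of $\hat f$ with sensitivity $2$: whenever $w'$ differs from $w$ on one pair by at most $1$ in absolute value, there is $a$ supported on $S$ with $\|a\|_1\le2$, depending only on $\hat f(w)$ and $w'-w$, such that $\hat f(w'+a)=\hat f(w)$ (with unique maximizer). *)

(* Defs.v *)
From mathcomp Require Import all_boot all_order all_algebra.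
From mathcomp Require Import reals.
Set Implicit Arguments. Unset Strict Implicit. Unset Printing Implicit Defensive.
Import Order.TTheory GRing.Theory Num.Theory.
Local Open Scope ring_scope.

(* Vertex set \hat V = [n] \cup {s,t}: inl i for i in [n], inr true = s, inr false = t. *)
Definition Vhat (n : nat) : finType := ('I_n + bool)%type.
Definition vs {n : nat} : Vhat n := inr true.
Definition vt {n : nat} : Vhat n := inr false.

Definition edge (n : nat) : finType := {e : {set Vhat n} | #|e| == 2%N}.

(* Objective  sum_{{i,j}} w_{ij} (1 - y_i y_j); for e = {i,j}, prod_(v in e) y v = y_i y_j. *)
Definition cutobj {R : realType} {n : nat} (w : edge n -> R) (y : Vhat n -> R) : R :=
  \sum_(e : edge n) w e * (1 - \prod_(v in val e) y v).

Definition feasible {R : realType} {n : nat} (y : Vhat n -> R) : Prop :=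
  (forall v, y v = 1 \/ y v = -1) /\ y vs = 1 /\ y vt = -1.

(* y is the unique maximizer for w, i.e. \hat f(w) is defined and equals y. *)
Definition fhat_is {R : realType} {n : nat} (w : edge n -> R) (y : Vhat n -> R) : Prop :=
  feasible y /\ forall y', feasible y' -> y' <> y -> cutobj w y' < cutobj w y.

Definition inS {n : nat} (e : edge n) : Prop :=
  exists (u : Vhat n) (i : 'I_n), (u = vs \/ u = vt) /\ val e = [set u; inl i].

Definition one_pair_perturb {R : realType} {n : nat} (w w' : edge n -> R) : Prop :=
  exists e0 : edge n, (forall e, e <> e0 -> w' e = w e) /\ `|w' e0 - w e0| <= 1.

(* Main.v *)
Require Import Defs.
From mathcomp Require Import all_boot all_order all_algebra.
From mathcomp Require Import reals.
From mathcomp Require Import ring lra.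
Set Implicit Arguments. Unset Strict Implicit. Unset Printing Implicit Defensive.
Import Order.TTheory GRing.Theory Num.Theory.
Local Open Scope ring_scope.

Lemma prod_norm1 (R : realType) (n : nat) (y : Vhat n -> R) (e : {set Vhat n}) :
  feasible y -> `|\prod_(v in e) y v| = 1.
Proof.
move=> [Hy _]; elim/big_rec: _ => [|v x _ IH]; first by rewrite normr1.
by rewrite normrM IH mulr1; case: (Hy v) => ->; rewrite ?normrN normr1.
Qed.

Definition Dk (R : realType) (n : nat) (y y' : Vhat n -> R) (k : 'I_n) : R :=
  if y' (inl k) == y (inl k) then 0 else 1.

Lemma diff_bound (R : realType) (n : nat) (y y' : Vhat n -> R) (e : {set Vhat n}) :
  feasible y -> feasible y' ->
  `|\prod_(v in e) y v - \prod_(v in e) y' v| <= 2 * \sum_(k | inl k \in e) Dk y y' k.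
Proof.
move=> Fy Fy'.
case: (boolP [exists k, (inl k \in e) && (y' (inl k) != y (inl k))]).
  case/existsP=> k /andP[ke nk].
  apply: (le_trans (ler_normB _ _)); rewrite !prod_norm1 //.
  rewrite (bigD1 k) //= /Dk (negbTE nk) mulrDr mulr1 -[X in X <= _]addr0 lerD2l.
  by rewrite mulr_ge0 // sumr_ge0 // => i _; case: ifP.
move=> /existsPn H.
have -> : \prod_(v in e) y v = \prod_(v in e) y' v.
  apply: eq_bigr => -[k|b] ke.
    by move: (H k); rewrite ke /= negbK => /eqP.
  case: Fy => _ [ys yt]; case: Fy' => _ [ys' yt'].
  by case: b {ke}; [rewrite -/(@vs n) ys ys' | rewrite -/(@vt n) yt yt'].
by rewrite subrr normr0 mulr_ge0 // sumr_ge0 // => i _; rewrite /Dk; case: ifP.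
Qed.

Definition opp (R : realType) (n : nat) (y : Vhat n -> R) (k : 'I_n) : Vhat n :=
  if y (inl k) == 1 then vt else vs.
Definition Sset (R : realType) (n : nat) (y : Vhat n -> R) (k : 'I_n) : {set Vhat n} :=
  [set inl k; opp y k].
Lemma Sset_card (R : realType) (n : nat) (y : Vhat n -> R) (k : 'I_n) :
  #|Sset y k| == 2.
Proof. by rewrite /Sset cards2 /opp; case: ifP. Qed.
Definition Sedge (R : realType) (n : nat) (y : Vhat n -> R) (k : 'I_n) : edge n :=
  exist _ (Sset y k) (Sset_card y k).
Definition cc (R : realType) (n : nat) (d : edge n -> R) (k : 'I_n) : R :=
  \sum_(e : edge n | inl k \in val e) `|d e|.
Definition Aof (R : realType) (n : nat) (y : Vhat n -> R) (d : edge n -> R) (f : edge n) : R :=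
  \sum_k cc d k * (val f == Sset y k)%:R.

Lemma sum_Sedge (R : realType) (n : nat) (y : Vhat n -> R) (k : 'I_n) (F : edge n -> R) :
  \sum_(f : edge n) (val f == Sset y k)%:R * F f = F (Sedge y k).
Proof.
rewrite (bigD1 (Sedge y k)) //= eqxx mul1r big1 ?addr0 // => f nf.
have -> : (val f == Sset y k) = false.
  apply/negbTE; apply: contra nf => /eqP H; apply/eqP; exact: val_inj.
by rewrite mul0r.
Qed.

Lemma cutobj_diff (R : realType) (n : nat) (u : edge n -> R) (y y' : Vhat n -> R) :
  cutobj u y' - cutobj u y = \sum_e u e * (\prod_(v in val e) y v - \prod_(v in val e) y' v).
Proof. rewrite /cutobj -sumrB; apply: eq_bigr => e _; ring. Qed.

Lemma cutobjD (R : realType) (n : nat) (u u' : edge n -> R) (y : Vhat n -> R) :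
  cutobj (fun e => u e + u' e) y = cutobj u y + cutobj u' y.
Proof. rewrite /cutobj -big_split; apply: eq_bigr => e _; exact: mulrDl. Qed.

Lemma Apart (R : realType) (n : nat) (y y' : Vhat n -> R) (d : edge n -> R) :
  feasible y -> feasible y' ->
  cutobj (Aof y d) y' - cutobj (Aof y d) y = - 2 * \sum_k cc d k * Dk y y' k.
Proof.
move=> Fy Fy'; rewrite cutobj_diff.
under eq_bigr => f _ do rewrite /Aof mulr_suml.
rewrite exchange_big /= mulr_sumr; apply: eq_bigr => k _.
under eq_bigr => f _ do rewrite mulrAC mulrC.
rewrite sum_Sedge /= /Sset.
have nk : inl k != opp y k by rewrite /opp; case: ifP.
rewrite !big_setU1 ?inE // !big_set1 /=.
case: Fy => Hy [ys yt]; case: Fy' => Hy' [ys' yt'].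
have Eo : y (opp y k) = - y (inl k) /\ y' (opp y k) = y (opp y k).
  rewrite /opp; case: ifP => [/eqP ->|].
    by rewrite yt yt'.
  by case: (Hy (inl k)) => ->; rewrite ?eqxx // => _; rewrite ys ys' opprK.
case: Eo => -> ->; rewrite /Dk.
case: (Hy (inl k)) => ->; case: (Hy' (inl k)) => ->; rewrite ?eqxx /=.
- ring.
- have -> : (-1 == 1 :> R) = false by apply/negbTE/eqP => ?; lra.
  ring.
- have -> : (1 == -1 :> R) = false by apply/negbTE/eqP => ?; lra.
  ring.
- ring.
Qed.

Lemma Dpart (R : realType) (n : nat) (y y' : Vhat n -> R) (d : edge n -> R) :
  feasible y -> feasible y' ->
  cutobj d y' - cutobj d y <= 2 * \sum_k cc d k * Dk y y' k.
Proof.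
move=> Fy Fy'; rewrite cutobj_diff.
apply: (le_trans (y := \sum_e `|d e| * (2 * \sum_(k | inl k \in val e) Dk y y' k))).
  apply: ler_sum => e _; apply: (le_trans (ler_norm _)); rewrite normrM.
  by apply: ler_wpM2l => //; exact: diff_bound.
under eq_bigr => e _ do rewrite mulrCA mulr_sumr.
rewrite -mulr_sumr ler_wpM2l //.
under eq_bigr => e _ do rewrite big_mkcond /=.
rewrite exchange_big /=; rewrite le_eqVlt; apply/orP; left; apply/eqP.
apply: eq_bigr => k _.
rewrite /cc mulr_suml [RHS]big_mkcond /=. reflexivity.
Qed.

Lemma cutobj_ext (R : realType) (n : nat) (u u' : edge n -> R) (y : Vhat n -> R) :
  (forall e, u e = u' e) -> cutobj u y = cutobj u' y.
Proof. by move=> H; apply: eq_bigr => e _; rewrite H. Qed.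

Lemma Aof_ge0 (R : realType) (n : nat) (y : Vhat n -> R) (d : edge n -> R) f : 0 <= Aof y d f.
Proof.
apply: sumr_ge0 => k _; apply: mulr_ge0; last by case: (_ == _).
by apply: sumr_ge0 => e _.
Qed.

Lemma Aof_sum (R : realType) (n : nat) (y : Vhat n -> R) (d : edge n -> R) :
  \sum_f Aof y d f = \sum_k cc d k.
Proof.
rewrite /Aof exchange_big /=; apply: eq_bigr => k _.
rewrite -mulr_sumr.
have := sum_Sedge y k (fun=> 1); under eq_bigr do rewrite mulr1.
by move=> ->; rewrite mulr1.
Qed.

Lemma card_inl (n : nat) (e : {set Vhat n}) : (#|[set k : 'I_n | inl k \in e]| <= #|e|)%N.
Proof.
rewrite -(card_imset _ (f := @inl _ bool : 'I_n -> Vhat n)); last by move=> a b [].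
apply: subset_leq_card; apply/subsetP => v /imsetP [k]; rewrite inE => H ->; exact: H.
Qed.

Theorem lemma5p7 (R : realType) (n : nat) :
  exists A : (Vhat n -> R) -> (edge n -> R) -> (edge n -> R),
    forall (w w' : edge n -> R) (y : Vhat n -> R),
      fhat_is w y -> one_pair_perturb w w' ->
      let a := A y (fun e => w' e - w e) in
      (forall e, a e != 0 -> inS e) /\
      \sum_(e : edge n) `|a e| <= 2 /\
      fhat_is (fun e => w' e + a e) y.
Proof.
exists (fun y d => Aof y d) => w w' y [Fy Hmax] [e0 [Hoth Hle]] a.
set d := fun e => w' e - w e.
have d0 : forall e, e != e0 -> d e = 0.
  by move=> e /eqP ne; rewrite /d Hoth // subrr.
split.
  move=> f; rewrite /a; case: (pickP (fun k => val f == Sset y k)) => [k /eqP Hk | H] nz.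
    exists (opp y k), k; split; first by rewrite /opp; case: ifP; auto.
    by rewrite Hk /Sset; apply/setP => v; rewrite !inE orbC.
  move: nz; rewrite /Aof big1 ?eqxx // => k _.
  by rewrite H mulr0.
split.
  under eq_bigr => f _ do rewrite ger0_norm ?Aof_ge0 //.
  rewrite Aof_sum.
  have Hc : forall k, cc d k = if inl k \in val e0 then `|d e0| else 0.
    move=> k; case: ifP => H0.
      rewrite /cc (bigD1 e0) //= big1 ?addr0 // => e /andP[_ ne].
      by rewrite d0 // normr0.
    rewrite /cc big1 // => e He.
    have ne : e != e0 by apply: contraTneq He => ->; rewrite H0.
    by rewrite d0 // normr0.
  rewrite (eq_bigr _ (fun k _ => Hc k)) -big_mkcond /=.
  rewrite -big_set sumr_const -mulr_natr.
  have hN := card_inl (val e0); rewrite (eqP (valP e0)) in hN.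
  have hN' : (#|[set k : 'I_n | inl k \in val e0]|%:R <= 2 :> R) by rewrite ler_nat.
  have hd : `|d e0| <= 1 by [].
  have hd0 : 0 <= `|d e0| by [].
  nra.
split => // y' Fy' ny.
have H1 := Hmax y' Fy' ny.
have H2 := Dpart d Fy Fy'.
have H3 := Apart d Fy Fy'.
have E : forall z, cutobj (fun e => w' e + a e) z = cutobj w z + cutobj d z + cutobj (Aof y d) z.
  move=> z; rewrite -!cutobjD; apply: cutobj_ext => e; rewrite /d /a; ring.
rewrite !E; lra.
Qed.
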